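(* Let $d$ be an even positive integer. Then $\tilde M^{(d)}$ equals the set of submatrices, indexed by $[N]^{d/2}\times[N]^{d/2}$, of matrices $\bm Z\in M^{(d)}$.
   Context: For a finite alphabet $[N]$, $[N]^{\le k}$ is the set of strings (including the empty string) of length at most $k$ over $[N]$; $\bm s\circ\bm t$ is concatenation; $\mathsf{odd}(\bm s)$ is the set of symbols occurring an odd number of times in $\bm s$. $M^{(d)}$ (degree $d$ complete pseudomoment matrices) is the set of real matrices $\bm Z$ with rows and columns indexed by $[N]^{\le d/2}$ such that (1) $\bm Z\succeq 0$; (2) $Z_{\bm s\bm t}$ depends only on $\mathsf{odd}(\bm s\circ\bm t)$; (3) $Z_{\bm s\bm t} = 1$ whenever $\mathsf{odd}(\bm s\circ\bm t)=\emptyset$. $\tilde M^{(d)}$ (degree $d$ truncated pseudomoment matrices) is the set of real matrices $\tilde{\bm Z}$ with rows and columns indexed by $[N]^{d/2}$ (strings of length exactly $d/2$) satisfying the same three conditions for $\bm s,\bm t\in[N]^{d/2}$. *)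

(* Defs.v *)
From HB Require Import structures.
From mathcomp Require Import all_boot all_order all_algebra.
Set Implicit Arguments. Unset Strict Implicit. Unset Printing Implicit Defensive.
Import Order.TTheory GRing.Theory Num.Theory.
Local Open Scope ring_scope.

(* Strings over the alphabet [N] = 'I_N of length at most k:
   a string is a pair (l, s) with l <= k and s an l-tuple. *)
Definition strle (N k : nat) := {l : 'I_k.+1 & l.-tuple 'I_N}.

Definition strle_seq (N k : nat) (s : strle N k) : seq 'I_N := val (tagged s).

Definition str_emb (N k : nat) (s : k.-tuple 'I_N) : strle N k :=
  @Tagged 'I_k.+1 ord_max (fun l : 'I_k.+1 => l.-tuple 'I_N) s.

Definition odd_syms (N : nat) (s : seq 'I_N) : {set 'I_N} :=
  [set i | odd (count_mem i s)].

Definition psd (R : realFieldType) (T : finType) (Z : T -> T -> R) : Prop :=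
  (forall s t, Z s t = Z t s) /\
  (forall x : T -> R, 0 <= \sum_(s : T) \sum_(t : T) x s * Z s t * x t).

(* a matrix indexed by T, whose index s is read as the string w s,
   satisfies conditions (1)-(3) *)
Definition pseudomoment (R : realFieldType) (N : nat) (T : finType)
    (w : T -> seq 'I_N) (Z : T -> T -> R) : Prop :=
  [/\ psd Z,
      (forall s t s' t', odd_syms (w s ++ w t) = odd_syms (w s' ++ w t') ->
                         Z s t = Z s' t')
    & (forall s t, odd_syms (w s ++ w t) = set0 -> Z s t = 1)].

Definition complete_pm (R : realFieldType) (N d : nat)
    (Z : strle N d./2 -> strle N d./2 -> R) : Prop :=
  pseudomoment (@strle_seq N d./2) Z.

Definition truncated_pm (R : realFieldType) (N d : nat)
    (Z : d./2.-tuple 'I_N -> d./2.-tuple 'I_N -> R) : Prop :=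
  pseudomoment (fun s : d./2.-tuple 'I_N => val s) Z.

(* Main.v *)
Require Import Defs.
From HB Require Import structures.
From mathcomp Require Import all_boot all_order all_algebra.
Import Order.TTheory GRing.Theory Num.Theory.
Local Open Scope ring_scope.
Set Implicit Arguments. Unset Strict Implicit.

Lemma odd_syms_card (N : nat) (w : seq 'I_N) :
  odd #|odd_syms w| = odd (size w).
Proof.
elim: w => [|x w IH]; first by rewrite /odd_syms; apply/negbTE; rewrite -[odd _]/(odd #|[set i : 'I_N | false]|) cards0.
have [xin|xnin] := boolP (x \in odd_syms w).
  have -> : odd_syms (x :: w) = odd_syms w :\ x.
    apply/setP=> i; rewrite !inE /=.
    case: (eqVneq i x) => [->|nix] /=.
      by move: xin; rewrite inE; case: (odd _).
    by rewrite add0n.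
  by move: IH; rewrite (cardsD1 x (odd_syms w)) xin /= => <-; case: (odd _).
have -> : odd_syms (x :: w) = x |: odd_syms w.
  apply/setP=> i; rewrite !inE /=.
  case: (eqVneq i x) => [->|nix] /=.
    by move: xnin; rewrite inE; case: (odd _).
  by rewrite add0n.
by rewrite cardsU1 xnin /= IH.
Qed.

Lemma push (R : realFieldType) (A B : finType) (f : A -> B) (M : B -> B -> R) (x : A -> R) :
  \sum_(a : A) \sum_(a' : A) x a * M (f a) (f a') * x a' =
  \sum_(b : B) \sum_(b' : B) (\sum_(a | f a == b) x a) * M b b' * (\sum_(a | f a == b') x a).
Proof.
symmetry.
have E : forall b b', (\sum_(a | f a == b) x a) * M b b' * (\sum_(a | f a == b') x a)
  = \sum_(a | f a == b) \sum_(a' | f a' == b') x a * M (f a) (f a') * x a'.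
  move=> b b'; rewrite -mulrA big_distrl /=; apply: eq_bigr => a /eqP fa.
  rewrite mulrA big_distrr /=; apply: eq_bigr => a' /eqP fa'.
  by rewrite fa fa'.
under eq_bigr => b _ do under eq_bigr => b' _ do rewrite E.
under eq_bigr => b _ do rewrite exchange_big /=.
rewrite (partition_big f predT) //=.
apply: eq_bigr => b _; apply: eq_bigr => a _.
by rewrite (partition_big f predT).
Qed.

Definition phi (n k : nat) (s : strle n.+1 k) : k.-tuple 'I_n.+1 :=
  insubd [tuple of nseq k ord0] (strle_seq s ++ nseq (k - size (strle_seq s)) ord0).

Lemma size_strle n k (s : strle n k) : (size (strle_seq s) <= k)%N.
Proof. by rewrite /strle_seq size_tuple -ltnS ltn_ord. Qed.

Lemma val_phi n k (s : strle n.+1 k) :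
  val (phi s) = strle_seq s ++ nseq (k - size (strle_seq s)) ord0.
Proof.
rewrite /phi val_insubd size_cat size_nseq subnKC ?size_strle //.
by rewrite eqxx.
Qed.

Lemma phi_emb n k (s : k.-tuple 'I_n.+1) : phi (str_emb s) = s.
Proof.
apply: val_inj; rewrite val_phi /strle_seq /= size_tuple subnn /=.
by rewrite cats0.
Qed.

Lemma odd_phi n k (s t : strle n.+1 k) :
  odd (size (strle_seq s)) = odd (size (strle_seq t)) ->
  odd_syms (val (phi s) ++ val (phi t)) = odd_syms (strle_seq s ++ strle_seq t).
Proof.
move=> hp; apply/setP => i; rewrite !inE !val_phi !count_cat !count_nseq.
rewrite !oddD !oddM !oddB ?size_strle // hp.
by case: (odd (count_mem i _)); case: (odd (count_mem i _)); case: (odd (pred1 i ord0) && _).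
Qed.

Theorem mainTheorem14 (R : rcfType) (N d : nat) (d_pos : (0 < d)%N)
    (d_even : ~~ odd d)
    (Zt : d./2.-tuple 'I_N -> d./2.-tuple 'I_N -> R) :
  truncated_pm Zt <->
  exists Z : strle N d./2 -> strle N d./2 -> R,
    complete_pm Z /\
    (forall s t : d./2.-tuple 'I_N, Zt s t = Z (str_emb s) (str_emb t)).
Proof.
have kpos : (0 < d./2)%N.
  by move: d_pos d_even {Zt}; case: d => [|[|d']].
rewrite /truncated_pm /complete_pm; move: Zt kpos; clear d_pos d_even; move: (d./2) => k Zt kpos.
split; last first.
  move=> [Z [[[Zsym Zpsd] Z2 Z3] HZ]]; split.
  - split; first by move=> s t; rewrite !HZ Zsym.
    move=> x; under eq_bigr => s _ do under eq_bigr => t _ do rewrite HZ.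
    rewrite (@push _ _ _ (@str_emb N k) Z x); exact: Zpsd.
  - by move=> s t s' t' h; rewrite !HZ; apply: Z2.
  - by move=> s t h; rewrite HZ; apply: Z3.
case: N Zt => [|n] Zt.
  move=> _; exists (fun _ _ => 1); split; last first.
    by move=> s; have := tnth s (Ordinal kpos); case.
  split.
  - split => // x.
    under eq_bigr => s _ do under eq_bigr => t _ do rewrite mulr1.
    under eq_bigr => s _ do rewrite -big_distrr /=.
    by rewrite -big_distrl /= -expr2 sqr_ge0.
  - by [].
  - by [].
move=> [[Zsym Zpsd] Z2 Z3].
pose par (s : strle n.+1 k) := odd (size (strle_seq s)).
exists (fun s t => if par s == par t then Zt (phi s) (phi t) else 0).
split; last first.
  move=> s t; rewrite /par /strle_seq /= !size_tuple eqxx !phi_emb //.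
split.
- split.
    by move=> s t; rewrite eq_sym; case: eqP => // _; rewrite Zsym.
  move=> x.
  have E : forall s t : strle n.+1 k, x s * (if par s == par t then Zt (phi s) (phi t) else 0) * x t
     = \sum_(p : bool) ((if par s == p then x s else 0) * Zt (phi s) (phi t) * (if par t == p then x t else 0)).
    move=> s t; rewrite big_bool /=.
    by case: (par s); case: (par t); rewrite /= ?mul0r ?mulr0 ?mul0r ?mulr0 ?add0r ?addr0.
  under eq_bigr => s _ do under eq_bigr => t _ do rewrite E.
  under eq_bigr => s _ do rewrite exchange_big /=.
  rewrite exchange_big /=; apply: sumr_ge0 => p _.
  rewrite (@push _ _ _ (@phi n k) Zt (fun s => if par s == p then x s else 0)).
  exact: Zpsd.
- move=> s t s' t' h.
  have hp : odd (size (strle_seq s ++ strle_seq t)) = odd (size (strle_seq s' ++ strle_seq t')).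
    by rewrite -!odd_syms_card h.
  move: hp; rewrite !size_cat !oddD -/(par s) -/(par t) -/(par s') -/(par t').
  case: (eqVneq (par s) (par t)) => est; case: (eqVneq (par s') (par t')) => est' //.
  + move=> _; apply: Z2; rewrite !odd_phi //.
  + by move: est est'; case: (par s); case: (par t); case: (par s'); case: (par t').
  + by move: est est'; case: (par s); case: (par t); case: (par s'); case: (par t').
- move=> s t h.
  have hp : odd (size (strle_seq s ++ strle_seq t)) = false.
    by rewrite -!odd_syms_card h cards0.
  move: hp; rewrite !size_cat !oddD -/(par s) -/(par t).
  case: (eqVneq (par s) (par t)) => est.
    by move=> _; apply: Z3; rewrite odd_phi.
  by move: est; case: (par s); case: (par t).
Qed.
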